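(* Consider the system $x_{t+1}=Ax_t+Bu_t+v_t$ with i.i.d. disturbances from a distribution $\mathcal{D}$ on $\mathbb{R}^n$, positive definite $Q,R$, $\gamma\in(0,1)$ and a feedback gain $K$ with $A_K=A+BK$. Let $P$ solve $P=Q+K^{\rm T}RK+\gamma A_K^{\rm T}PA_K$ and for $x\in\mathbb{R}^n$ let $$G^{K}(x)=x^{\rm T}Px+2\sum_{k=0}^{\infty}\gamma^{k+1}w_k^{\rm T}PA_K^{k+1}x+\sum_{k=0}^{\infty}\gamma^{k+1}w_k^{\rm T}Pw_k+2\sum_{k=1}^{\infty}\gamma^{k+1}w_k^{\rm T}P\sum_{\tau=0}^{k-1}A_K^{k-\tau}w_\tau,$$ with $w_k\sim\mathcal{D}$ mutually independent. Assume $\mathbb{E}[w_k]=0$ and $\mathbb{E}[\|w_k\|^4]\le\sigma_4^4$ for all $k\in\mathbb{N}$, and that $K$ is stabilizing with $\|A_K\|=\rho_K<1$ (spectral norm). Then the variance of $G^K(x)$ is bounded (finite).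
   Context: $\|\cdot\|$ denotes the Euclidean norm for vectors and the spectral norm for matrices. *)

(* Defs.v *)
From HB Require Import structures.
From mathcomp Require Import all_boot all_order all_algebra.
From mathcomp Require Import all_classical all_reals all_analysis.
Set Implicit Arguments. Unset Strict Implicit. Unset Printing Implicit Defensive.
Import Order.TTheory GRing.Theory Num.Theory.
Import numFieldNormedType.Exports.
Local Open Scope classical_set_scope.
Local Open Scope ring_scope.

Section defs.
Variable R : realType.

Definition scal (M : 'M[R]_1) : R := M 0 0.

Definition vnorm n (v : 'cV[R]_n) : R := Num.sqrt (\sum_(i < n) v i 0 ^+ 2).

Definition specnorm m n (M : 'M[R]_(m, n)) : R :=
  sup [set vnorm (M *m x) | x in [set x : 'cV[R]_n | vnorm x <= 1]].

Definition posdef n (M : 'M[R]_n) : Prop :=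
  M^T = M /\ forall x : 'cV[R]_n, x != 0 -> 0 < scal (x^T *m M *m x).

(* coordinates of a column vector, as an element of the measurable space R^n *)
Definition cv2tuple n (v : 'cV[R]_n) : n.-tuple R := [tuple v i 0 | i < n].

Definition series_sum (u : nat -> R) : R := limn (fun N => \sum_(0 <= k < N) u k).
Definition series_sum1 (u : nat -> R) : R := limn (fun N => \sum_(1 <= k < N) u k).

Definition GK n (AK P : 'M[R]_n) (gamma : R) (x : 'cV[R]_n)
    (w : nat -> 'cV[R]_n) : R :=
  scal (x^T *m P *m x)
  + 2 * series_sum (fun k => gamma ^+ k.+1 * scal ((w k)^T *m P *m (AK ^+ k.+1 *m x)))
  + series_sum (fun k => gamma ^+ k.+1 * scal ((w k)^T *m P *m w k))
  + 2 * series_sum1 (fun k => gamma ^+ k.+1 *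
          scal ((w k)^T *m P *m (\sum_(0 <= tau < k) AK ^+ (k - tau) *m w tau))).
End defs.

Section prob.
Local Open Scope ereal_scope.
Context d (T : measurableType d) (R : realType) (Pr : probability T R).

Definition mutually_independent n (w : nat -> T -> 'cV[R]_n) : Prop :=
  forall (s : seq nat) (B : nat -> set (n.-tuple R)),
    uniq s -> (forall k, measurable (B k)) ->
    Pr (\big[setI/setT]_(k <- s) ((@cv2tuple R n \o w k) @^-1` B k))
    = \prod_(k <- s) Pr ((@cv2tuple R n \o w k) @^-1` B k).
End prob.

(* Main.v *)
Require Import Defs.
From HB Require Import structures.
From mathcomp Require Import all_boot all_order all_algebra.
From mathcomp Require Import all_classical all_reals all_analysis.
From mathcomp Require Import measurable_realfun.
From mathcomp.algebra_tactics Require Import ring lra.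
Import Order.TTheory GRing.Theory Num.Theory.
Import numFieldNormedType.Exports.
Local Open Scope classical_set_scope.
Local Open Scope ring_scope.
Set Implicit Arguments. Unset Strict Implicit. Unset Printing Implicit Defensive.
Lemma vnorm_ge0 (R : realType) n (v : 'cV[R]_n) : 0 <= vnorm v.
Proof. exact: sqrtr_ge0. Qed.

Lemma sumsq_ge0 (R : realType) n (v : 'cV[R]_n) : 0 <= \sum_(i < n) v i 0 ^+ 2.
Proof. by apply: sumr_ge0 => i _; exact: sqr_ge0. Qed.

Lemma vnorm_sq (R : realType) n (v : 'cV[R]_n) : vnorm v ^+ 2 = \sum_(i < n) v i 0 ^+ 2.
Proof. by rewrite /vnorm sqr_sqrtr // sumsq_ge0. Qed.

Lemma coord_le_vnorm (R : realType) n (v : 'cV[R]_n) i : `|v i 0| <= vnorm v.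
Proof.
rewrite -sqrtr_sqr /vnorm ler_sqrt ?sumsq_ge0 //.
rewrite (bigD1 i) //= lerDl; apply: sumr_ge0 => j _; exact: sqr_ge0.
Qed.

Lemma sumsq_le_sqsum (R : realType) (I : Type) (s : seq I) (a : I -> R) :
  (forall i, 0 <= a i) -> \sum_(i <- s) a i ^+ 2 <= (\sum_(i <- s) a i) ^+ 2.
Proof.
move=> a0; elim: s => [|x s IH]; first by rewrite !big_nil expr0n.
rewrite !big_cons sqrrD -addrA lerD2l.
apply: (le_trans IH); rewrite lerDr; apply: mulrn_wge0; apply: mulr_ge0 => //.
apply: sumr_ge0 => *; exact: a0.
Qed.

Lemma vnorm_le_l1 (R : realType) n (v : 'cV[R]_n) : vnorm v <= \sum_(i < n) `|v i 0|.
Proof.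
rewrite /vnorm -(ger0_norm (sumr_ge0 _ (fun i _ => normr_ge0 (v i 0)))).
rewrite -sqrtr_sqr ler_sqrt ?sqr_ge0 //.
under eq_bigr do rewrite -real_normK ?num_real //.
exact: sumsq_le_sqsum.
Qed.

Lemma vnormZ (R : realType) n (c : R) (v : 'cV[R]_n) : vnorm (c *: v) = `|c| * vnorm v.
Proof.
rewrite /vnorm (eq_bigr (fun i => c ^+ 2 * v i 0 ^+ 2)); last first.
  by move=> i _; rewrite mxE exprMn.
by rewrite -mulr_sumr sqrtrM ?sqr_ge0 // sqrtr_sqr.
Qed.

Lemma vnorm0 (R : realType) n : vnorm (0 : 'cV[R]_n) = 0.
Proof. by rewrite -(scale0r (0 : 'cV[R]_n)) vnormZ normr0 mul0r. Qed.

Lemma vnorm_eq0 (R : realType) n (v : 'cV[R]_n) : vnorm v = 0 -> v = 0.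
Proof.
move=> h; apply/matrixP => i j; rewrite ord1 mxE; apply/eqP.
by rewrite -normr_le0 -h coord_le_vnorm.
Qed.

Definition mxl1 (R : realType) m n (M : 'M[R]_(m, n)) : R := \sum_i \sum_j `|M i j|.

Lemma mxl1_ge0 (R : realType) m n (M : 'M[R]_(m, n)) : 0 <= mxl1 M.
Proof. by apply: sumr_ge0 => i _; apply: sumr_ge0 => j _. Qed.

Lemma vnorm_mul_le (R : realType) m n (M : 'M[R]_(m, n)) (v : 'cV[R]_n) :
  vnorm (M *m v) <= mxl1 M * vnorm v.
Proof.
apply: (le_trans (vnorm_le_l1 _)); rewrite /mxl1 mulr_suml.
apply: ler_sum => i _; rewrite mxE mulr_suml.
apply: (le_trans (ler_norm_sum _ _ _)); apply: ler_sum => j _.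
rewrite normrM ler_wpM2l //; exact: coord_le_vnorm.
Qed.

Lemma specnorm_has_sup (R : realType) n (M : 'M[R]_n) :
  has_sup [set vnorm (M *m x) | x in [set x : 'cV[R]_n | vnorm x <= 1]].
Proof.
split; first by exists 0, 0 => //=; rewrite ?mulmx0 vnorm0.
exists (mxl1 M) => _ [x /= x1 <-].
apply: (le_trans (vnorm_mul_le _ _)); rewrite -[leRHS]mulr1 ler_wpM2l //.
exact: mxl1_ge0.
Qed.

Lemma specnorm_ge0 (R : realType) n (M : 'M[R]_n) : 0 <= specnorm M.
Proof.
rewrite /specnorm; apply: (le_trans _ (sup_upper_bound (specnorm_has_sup M) _)).
  exact: (lexx 0).
by exists 0 => //=; rewrite ?mulmx0 vnorm0.
Qed.

Lemma specnorm_mul_le (R : realType) n (M : 'M[R]_n) (v : 'cV[R]_n) :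
  vnorm (M *m v) <= specnorm M * vnorm v.
Proof.
have [v0|v0] := eqVneq (vnorm v) 0.
  by rewrite (vnorm_eq0 v0) mulmx0 !vnorm0 mulr0.
have vp : 0 < vnorm v by rewrite lt_neqAle eq_sym v0 vnorm_ge0.
rewrite -ler_pdivrMr //.
have -> : vnorm (M *m v) / vnorm v = vnorm (M *m ((vnorm v)^-1 *: v)).
  by rewrite -scalemxAr vnormZ ger0_norm ?invr_ge0 ?vnorm_ge0 // mulrC.
apply: (sup_upper_bound (specnorm_has_sup M)); exists ((vnorm v)^-1 *: v) => //=.
by rewrite vnormZ ger0_norm ?invr_ge0 ?vnorm_ge0 // mulVf.
Qed.

Lemma specnorm_pow_le (R : realType) n (M : 'M[R]_n) (v : 'cV[R]_n) k :
  vnorm (M ^+ k *m v) <= specnorm M ^+ k * vnorm v.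
Proof.
elim: k => [|k IH]; first by rewrite expr0 mul1mx expr0 mul1r.
rewrite exprS -mulmxE -mulmxA exprS -mulrA.
apply: (le_trans (specnorm_mul_le _ _)); rewrite ler_wpM2l //.
exact: specnorm_ge0.
Qed.
Lemma scalE (R : realType) m n (u : 'cV[R]_m) (M : 'M[R]_(m, n)) (v : 'cV[R]_n) :
  scal (u^T *m M *m v) = \sum_i \sum_j u i 0 * M i j * v j 0.
Proof.
rewrite /scal mxE exchange_big /=; apply: eq_bigr => j _; rewrite mxE mulr_suml.
by apply: eq_bigr => i _; rewrite mxE.
Qed.

Lemma scal_le (R : realType) m n (u : 'cV[R]_m) (M : 'M[R]_(m, n)) (v : 'cV[R]_n) :
  `|scal (u^T *m M *m v)| <= mxl1 M * vnorm u * vnorm v.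
Proof.
rewrite scalE /mxl1 !mulr_suml; apply: (le_trans (ler_norm_sum _ _ _)).
apply: ler_sum => i _; rewrite !mulr_suml.
apply: (le_trans (ler_norm_sum _ _ _)); apply: ler_sum => j _.
rewrite !normrM (mulrC `|u i 0|) -!mulrA ler_wpM2l //.
by rewrite ler_pM ?coord_le_vnorm.
Qed.

Lemma scal_sumr (R : realType) m n (I : Type) (r : seq I) (u : 'cV[R]_m) (M : 'M[R]_(m, n))
   (f : I -> 'cV[R]_n) :
  scal (u^T *m M *m (\sum_(i <- r) f i)) = \sum_(i <- r) scal (u^T *m M *m f i).
Proof.
rewrite mulmx_sumr /scal summxE; done.
Qed.
Definition cmeas (R : realType) d (T : measurableType d) n (v : T -> 'cV[R]_n) :=
  forall i, measurable_fun [set: T] (fun t => v t i 0).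

Lemma mfM (R : realType) d (T : measurableType d) (f g : T -> R) :
  measurable_fun [set: T] f -> measurable_fun [set: T] g ->
  measurable_fun [set: T] (fun t => f t * g t).
Proof. exact: measurable_realfun.measurable_funM. Qed.

Lemma mfD (R : realType) d (T : measurableType d) (f g : T -> R) :
  measurable_fun [set: T] f -> measurable_fun [set: T] g ->
  measurable_fun [set: T] (fun t => f t + g t).
Proof. exact: measurable_realfun.measurable_funD. Qed.

Lemma mfX (R : realType) d (T : measurableType d) (f : T -> R) k :
  measurable_fun [set: T] f -> measurable_fun [set: T] (fun t => f t ^+ k).
Proof. exact: measurable_realfun.measurable_funX. Qed.

Lemma cmeas_w (R : realType) d (T : measurableType d) n (w : T -> 'cV[R]_n) :
  measurable_fun [set: T] (@cv2tuple R n \o w) -> cmeas w.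
Proof.
move/measurable_fun_tnthP => h i; have := h i.
by apply: eq_measurable_fun => t _ /=; rewrite tnth_mktuple.
Qed.

Lemma cmeas_mul (R : realType) d (T : measurableType d) m n (M : 'M[R]_(m, n))
  (v : T -> 'cV[R]_n) : cmeas v -> cmeas (fun t => M *m v t).
Proof.
move=> hv i; apply: (eq_measurable_fun (fun t => \sum_j M i j * v t j 0)).
  by move=> t _; rewrite mxE.
by apply: measurable_sum => j; apply: mfM => //; exact: measurable_cst.
Qed.

Lemma cmeas_sum (R : realType) d (T : measurableType d) n (I : Type) (r : seq I)
  (f : I -> T -> 'cV[R]_n) : (forall i, cmeas (f i)) ->
  cmeas (fun t => \sum_(i <- r) f i t).
Proof.
move=> hf i; apply: (eq_measurable_fun (fun t => \sum_(k <- r) f k t i 0)).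
  by move=> t _; rewrite summxE.
by apply: measurable_sum => k; exact: hf.
Qed.

Lemma meas_scal (R : realType) d (T : measurableType d) m n (M : 'M[R]_(m, n))
  (u : T -> 'cV[R]_m) (v : T -> 'cV[R]_n) : cmeas u -> cmeas v ->
  measurable_fun [set: T] (fun t => scal ((u t)^T *m M *m v t)).
Proof.
move=> hu hv; apply: (eq_measurable_fun (fun t => \sum_i \sum_j u t i 0 * M i j * v t j 0)).
  by move=> t _; rewrite scalE.
apply: measurable_sum => i; apply: measurable_sum => j.
apply: mfM => //; apply: mfM => //; exact: measurable_cst.
Qed.

Lemma meas_sumsq (R : realType) d (T : measurableType d) n (v : T -> 'cV[R]_n) :
  cmeas v -> measurable_fun [set: T] (fun t => \sum_i v t i 0 ^+ 2).
Proof. by move=> hv; apply: measurable_sum => i; exact: mfX. Qed.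
Lemma cvg_seqP (R : realType) (u : nat -> R) :
  cvgn u <-> forall j : nat, exists N, forall m, (N <= m)%N -> `|u N - u m| < j.+1%:R^-1.
Proof.
split.
  move=> cu j; have e0 : 0 < j.+1%:R^-1 / 2 :> R by rewrite divr_gt0 // invr_gt0.
  move/cvgrPdist_lt: cu => /(_ _ e0) [N _ HN].
  exists N => m Nm; rewrite (splitr (j.+1%:R^-1)).
  rewrite -(subrKA (limn u)); apply: (le_lt_trans (ler_normD _ _)).
  apply: ltrD; last exact: HN m Nm.
  by rewrite distrC; apply: HN N (leqnn N).
move=> H; apply/cauchy_cvgP; apply/cauchyP => e e0.
have [j _ Hj] := near_infty_natSinv_lt (PosNum e0).
have [N HN] := H j; exists (u N); exists N => // m /= Nm.
rewrite -ball_normE /=; apply: (lt_trans (HN m Nm)); exact: Hj j (leqnn j).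
Qed.
Lemma meas_limn (R : realType) d (T : measurableType d) (h : nat -> T -> R) :
  (forall N, measurable_fun [set: T] (h N)) ->
  measurable_fun [set: T] (fun t => limn (h ^~ t)).
Proof.
move=> mh.
pose C := \bigcap_j \bigcup_N \bigcap_(m in [set m | (N <= m)%N])
   ((fun t => h N t - h m t) @^-1` `]- (j.+1%:R^-1 : R), j.+1%:R^-1[).
have mC : measurable C.
  apply: bigcapT_measurable => j; apply: bigcup_measurable => N _.
  apply: bigcap_measurable; first by exists N => /=.
  move=> m _; rewrite -[X in measurable X]setTI.
  apply: (measurable_realfun.measurable_funB (mh N) (mh m)) => //; exact: measurable_itv.
have CE : forall t, C t <-> cvgn (h ^~ t).
  move=> t; rewrite cvg_seqP; split.
    move=> Ct j; have [N _ HN] := Ct j Logic.I; exists N => m Nm.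
    by have := HN m Nm; rewrite /= in_itv /= -ltr_norml.
  move=> H j _; have [N HN] := H j; exists N => // m Nm.
  by rewrite /= in_itv /= -ltr_norml; exact: HN.
rewrite -(setUv C) measurable_funU //; last exact: measurableC.
split.
  apply: (measurable_realfun.measurable_fun_cvg (h := h)).
    by move=> m; apply: measurable_funS (mh m).
  by move=> t /CE.
apply: (eq_measurable_fun (fun _ => (0:R))); last exact: measurable_cst.
move=> t; rewrite inE => /= nC; rewrite dvgP //; by move/CE.
Qed.
Lemma wcs (R : realType) (I : Type) (r : seq I) (y b : I -> R) :
  (forall i, 0 < b i) ->
  (\sum_(i <- r) y i) ^+ 2 <= (\sum_(i <- r) b i) * \sum_(i <- r) (y i ^+ 2 / b i).
Proof.
move=> b0.
case: r => [|i0 s]; first by rewrite !big_nil expr0n mul0r.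
set B := \sum_(i <- i0 :: s) b i; set Y := \sum_(i <- i0 :: s) y i.
set Q := \sum_(i <- i0 :: s) (y i ^+ 2 / b i).
have Bp : 0 < B.
  rewrite /B big_cons; apply: (lt_le_trans (b0 i0)); rewrite lerDl.
  apply: sumr_ge0 => j _; exact: ltW.
set m := Y / B.
have H : 0 <= \sum_(i <- i0 :: s) b i * (y i / b i - m) ^+ 2.
  by apply: sumr_ge0 => i _; apply: mulr_ge0; [exact: ltW|exact: sqr_ge0].
have E : \sum_(i <- i0 :: s) b i * (y i / b i - m) ^+ 2 = Q - 2 * m * Y + m ^+ 2 * B.
  rewrite (eq_bigr (fun i => y i ^+ 2 / b i - 2 * m * y i + m ^+ 2 * b i)); last first.
    move=> i _; have bi := b0 i; field; by rewrite gt_eqF.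
  by rewrite big_split /= sumrB -!mulr_sumr.
rewrite E /m in H.
have : 0 <= B * (Q - 2 * (Y / B) * Y + (Y / B) ^+ 2 * B) by apply: mulr_ge0 => //; exact: ltW.
have -> : B * (Q - 2 * (Y / B) * Y + (Y / B) ^+ 2 * B) = B * Q - Y ^+ 2.
  by field; rewrite gt_eqF.
by rewrite subr_ge0.
Qed.

Lemma geom_le (R : realType) (g : R) N : 0 <= g < 1 ->
  \sum_(0 <= k < N) g ^+ k.+1 <= (1 - g)^-1.
Proof.
case/andP => g0 g1.
have g1' : 0 < 1 - g by rewrite subr_gt0.
rewrite -(ler_pM2l g1') mulfV ?gt_eqF //.
have -> : (1 - g) * \sum_(0 <= k < N) g ^+ k.+1 = g - g ^+ N.+1.
  elim: N => [|N IH]; first by rewrite big_geq // mulr0 expr1 subrr.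
  rewrite big_nat_recr //= mulrDr IH (exprS g N.+1); set x := g ^+ N.+1; ring.
rewrite lerBlDr; apply: (le_trans (ltW g1)); rewrite lerDl; exact: exprn_ge0.
Qed.
Lemma Lfun2_crit (R : realType) d (T : measurableType d) (mu : {measure set T -> \bar R})
  (f : T -> R) : measurable_fun [set: T] f ->
  (\int[mu]_t ((f t) ^+ 2)%:E < +oo)%E -> f \in Lfun mu 2%:E.
Proof.
move=> mf fi; rewrite inE; apply/andP; split; first by rewrite inE.
rewrite inE /= /finite_norm unlock /Lnorm; apply: poweR_lty.
rewrite (eq_integral (fun x => ((f x) ^+ 2)%:E)) //.
by move=> x _ /=; rewrite powR_mulrn // real_normK ?num_real.
Qed.
Lemma core (R : realType) d (T : measurableType d) (mu : {measure set T -> \bar R})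
  (u Z : nat -> T -> R) (g M : R) :
  0 < g < 1 ->
  (forall k, measurable_fun [set: T] (u k)) ->
  (forall k, measurable_fun [set: T] (Z k)) ->
  (forall k t, 0 <= Z k t) ->
  (forall k t, u k t ^+ 2 <= (g ^+ k.+1) ^+ 2 * Z k t) ->
  (forall k, (\int[mu]_t (Z k t)%:E <= M%:E)%E) ->
  (fun t => limn (fun N => \sum_(0 <= k < N) u k t)) \in Lfun mu 2%:E.
Proof.
move=> /andP[g0 g1] mu_ mZ Z0 uZ iZ.
have g01 : 0 <= g < 1 by rewrite ltW.
set c := (1 - g)^-1.
have c0 : 0 < c by rewrite invr_gt0 subr_gt0.
have M0 : 0 <= M.
  rewrite -lee_fin; apply: le_trans (iZ 0%N).
  by apply: integral_ge0 => t _; rewrite lee_fin.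
set F := fun t => limn (fun N => \sum_(0 <= k < N) u k t).
set V := fun t => (\sum_(0 <= k <oo) ((g ^+ k.+1 * Z k t)%:E))%E.
have mF : measurable_fun [set: T] F.
  by apply: meas_limn => N; apply: measurable_sum => k; exact: mu_.
have bZ0 : forall k t, (0 <= (g ^+ k.+1 * Z k t)%:E)%E.
  by move=> k t; rewrite lee_fin mulr_ge0 // exprn_ge0 // ltW.
have mbZ : forall k, measurable_fun [set: T] (EFin \o (fun t => g ^+ k.+1 * Z k t)).
  move=> k; apply/measurable_EFinP; apply: mfM => //; exact: measurable_cst.
have pw : forall t, (((F t) ^+ 2)%:E <= c%:E * V t)%E.
  move=> t.
  have V0 : (0 <= V t)%E by apply: nneseries_ge0 => k _ _.
  case Vt: (V t) => [v| |]; last by rewrite Vt in V0.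
    2: by rewrite gt0_muley ?lte_fin // leey.
  have bound : forall N, (\sum_(0 <= k < N) u k t) ^+ 2 <= c * v.
    move=> N.
    apply: (le_trans (@wcs _ _ _ _ (fun k => g ^+ k.+1) _)) => [k|]; first exact: exprn_gt0.
    apply: ler_pM.
    - by apply: sumr_ge0 => k _; exact: exprn_ge0 (ltW g0).
    - apply: sumr_ge0 => k _; apply: divr_ge0; [exact: sqr_ge0|exact: exprn_ge0 (ltW g0)].
    - exact: geom_le.
    - apply: (@le_trans _ _ (\sum_(0 <= k < N) g ^+ k.+1 * Z k t)).
        apply: ler_sum => k _; rewrite ler_pdivrMr ?exprn_gt0 //.
        by rewrite mulrAC -expr2.
      rewrite -lee_fin -sumEFin -Vt; exact: nneseries_lim_ge.
  have Fv : F t ^+ 2 <= c * v.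
    rewrite /F; have [cS|dS] := pselect (cvgn (fun N => \sum_(0 <= k < N) u k t)).
      set S := (fun N => \sum_(0 <= k < N) u k t) in cS bound *.
      have cl : (fun N => S N * S N) @ \oo --> limn S * limn S by apply: cvgM.
      rewrite expr2 -(cvg_lim _ cl) //; apply: limr_le; first exact: cvgP cl.
      by apply: nearW => N /=; rewrite -expr2 bound.
    rewrite dvgP // expr0n /=; apply: mulr_ge0; first exact: ltW.
    by rewrite -lee_fin -Vt.
  by rewrite -EFinM lee_fin.
have mV : measurable_fun [set: T] V.
  exact: (@ge0_emeasurable_sum _ _ _ [set: T] (fun k t => (g ^+ k.+1 * Z k t)%:E) xpredT
     (fun k t _ _ => bZ0 k t) (fun k _ => mbZ k)).
apply: Lfun2_crit => //.
have V0 : forall t, (0 <= V t)%E by move=> t; apply: nneseries_ge0 => k _ _.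
have h1 : (\int[mu]_t ((F t) ^+ 2)%:E <= c%:E * \int[mu]_t V t)%E.
  rewrite -ge0_integralZl_EFin //; last exact: ltW.
  apply: ge0_le_integral => //.
  - by move=> t _; rewrite lee_fin sqr_ge0.
  - by apply/measurable_EFinP; exact: mfX.
  - exact: measurable_funeM.
have h2 : (\int[mu]_t V t <= (c * M)%:E)%E.
  rewrite /V integral_nneseries //.
  apply: (@le_trans _ _ (\sum_(0 <= k <oo) ((g ^+ k.+1 * M)%:E))%E).
    apply: lee_nneseries.
      by move=> k _ _; apply: integral_ge0 => t _.
    move=> k _.
    under eq_integral do rewrite EFinM.
    rewrite ge0_integralZl_EFin //; last exact: exprn_ge0 (ltW g0).
      by rewrite EFinM; apply: lee_wpmul2l; [rewrite lee_fin exprn_ge0 // ltW|exact: iZ].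
    by move=> t _; rewrite lee_fin.
    by apply/measurable_EFinP.
  apply: lime_le.
    by apply: is_cvg_nneseries => k _ _; rewrite lee_fin mulr_ge0 // exprn_ge0 // ltW.
  apply: nearW => N /=; rewrite sumEFin lee_fin -mulr_suml.
  by rewrite ler_wpM2r //; exact: geom_le.
apply: (le_lt_trans h1); apply: (le_lt_trans (lee_wpmul2l _ h2)).
  by rewrite lee_fin ltW.
by rewrite -EFinM ltry.
Qed.
Definition IB (R : realType) d (T : measurableType d) (mu : {measure set T -> \bar R})
  (f : T -> R) (S : R) :=
  [/\ measurable_fun [set: T] f, (forall t, 0 <= f t) & (\int[mu]_t (f t)%:E <= S%:E)%E].

Lemma IB_ext (R : realType) d (T : measurableType d) (mu : {measure set T -> \bar R})
  (f g : T -> R) S : (forall t, f t = g t) -> IB mu f S -> IB mu g S.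
Proof.
move=> fg [mf f0 fi]; have -> : g = f by apply: funext => t; rewrite fg.
by split.
Qed.

Lemma IB_le (R : realType) d (T : measurableType d) (mu : {measure set T -> \bar R})
  (f : T -> R) S S' : S <= S' -> IB mu f S -> IB mu f S'.
Proof. by move=> SS [mf f0 fi]; split => //; apply: (le_trans fi); rewrite lee_fin. Qed.

Lemma IB_add (R : realType) d (T : measurableType d) (mu : {measure set T -> \bar R})
  (f g : T -> R) S1 S2 : IB mu f S1 -> IB mu g S2 -> IB mu (fun t => f t + g t) (S1 + S2).
Proof.
move=> [mf f0 fi] [mg g0 gi]; split.
- exact: mfD.
- by move=> t; rewrite addr_ge0.
under eq_integral do rewrite EFinD.
rewrite ge0_integralD //; try (by move=> t _; rewrite lee_fin); try exact/measurable_EFinP.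
by rewrite EFinD; apply: leeD.
Qed.

Lemma IB_scale (R : realType) d (T : measurableType d) (mu : {measure set T -> \bar R})
  (f : T -> R) a S : 0 <= a -> IB mu f S -> IB mu (fun t => a * f t) (a * S).
Proof.
move=> a0 [mf f0 fi]; split.
- by apply: mfM => //; exact: measurable_cst.
- by move=> t; rewrite mulr_ge0.
under eq_integral do rewrite EFinM.
rewrite ge0_integralZl_EFin //; try (by move=> t _; rewrite lee_fin); try exact/measurable_EFinP.
by rewrite EFinM; apply: lee_wpmul2l; rewrite ?lee_fin.
Qed.

Lemma IB_zero (R : realType) d (T : measurableType d) (mu : {measure set T -> \bar R}) :
  IB mu (fun _ => 0) 0.
Proof.
split; [exact: measurable_cst| by [] | by rewrite integral0].
Qed.

Lemma IB_sum (R : realType) d (T : measurableType d) (mu : {measure set T -> \bar R})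
  (I : Type) (s : seq I) (f : I -> T -> R) (S : I -> R) :
  (forall i, IB mu (f i) (S i)) ->
  IB mu (fun t => \sum_(i <- s) f i t) (\sum_(i <- s) S i).
Proof.
move=> h; elim: s => [|i s IH].
  by rewrite big_nil; apply: (IB_ext _ (IB_zero mu)) => t; rewrite big_nil.
rewrite big_cons; apply: (IB_ext _ (IB_add (h i) IH)) => t; by rewrite big_cons.
Qed.

Lemma sq_le (R : realType) (x y : R) : `|x| <= y -> x ^+ 2 <= y ^+ 2.
Proof.
move=> xy; rewrite -real_normK ?num_real // !expr2.
by apply: ler_pM => //; exact: (le_trans (normr_ge0 x) xy).
Qed.

Lemma geom_rev (R : realType) (r : R) k : 0 <= r < 1 ->
  \sum_(0 <= tau < k) r ^+ (k - tau) <= (1 - r)^-1.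
Proof.
move=> r01; rewrite big_nat_rev /=.
rewrite (eq_big_nat _ _ (F2 := fun j => r ^+ j.+1)); first exact: geom_le.
move=> j /andP[_ jk]; rewrite add0n subKn //.
Qed.

Lemma sum1E (R : realType) (u : nat -> R) :
  series_sum1 u = series_sum (fun k => if (0 < k)%N then u k else 0).
Proof.
rewrite /series_sum1 /series_sum.
have -> : (fun N => \sum_(1 <= k < N) u k) =
          (fun N => \sum_(0 <= k < N) (if (0 < k)%N then u k else 0)).
  apply: funext => -[|N]; first by rewrite !big_geq.
  rewrite [RHS]big_ltn // ltnn add0r; apply: eq_big_nat => k /andP[k1 _].
  by rewrite k1.
by [].
Qed.
Definition Phi (R : realType) (T : Type) n (w : nat -> T -> 'cV[R]_n) k t :=
  1 + vnorm (w k t) ^+ 4.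

Lemma vnorm4 (R : realType) n (v : 'cV[R]_n) : vnorm v ^+ 4 = (\sum_i v i 0 ^+ 2) ^+ 2.
Proof. by rewrite -[4%N]/(2 * 2)%N exprM vnorm_sq. Qed.

Lemma IB_Phi (R : realType) d (T : measurableType d) (Pr : probability T R) n
  (w : nat -> T -> 'cV[R]_n) (s4 : R) :
  (forall k, cmeas (w k)) ->
  (forall k, ('E_Pr[fun t => (vnorm (w k t) ^+ 4)%R] <= s4%:E)%E) ->
  forall k, IB Pr (Phi w k) (1 + s4).
Proof.
move=> hw hE k.
have m4 : measurable_fun [set: T] (fun t => vnorm (w k t) ^+ 4).
  apply: (eq_measurable_fun (fun t => (\sum_i w k t i 0 ^+ 2) ^+ 2)).
    by move=> t _; rewrite vnorm4.
  by apply: mfX; exact: meas_sumsq.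
apply: IB_add.
  split; [exact: measurable_cst| by [] |].
  by rewrite integral_cst //= probability_setT mule1.
split => //; first by move=> t; exact: exprn_ge0 (vnorm_ge0 _).
by have := hE k; rewrite unlock.
Qed.

Lemma cmeas_cst (R : realType) d (T : measurableType d) n (v : 'cV[R]_n) :
  cmeas (fun _ : T => v).
Proof. by move=> i; exact: measurable_cst. Qed.

Lemma La (R : realType) d (T : measurableType d) (Pr : probability T R) n
  (AK P : 'M[R]_n) (g : R) (x : 'cV[R]_n) (w : nat -> T -> 'cV[R]_n) S :
  0 < g < 1 -> specnorm AK < 1 -> (forall k, cmeas (w k)) ->
  (forall k, IB Pr (Phi w k) S) ->
  (fun t => series_sum (fun k => g ^+ k.+1 * scal ((w k t)^T *m P *m (AK ^+ k.+1 *m x))))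
    \in Lfun Pr 2%:E.
Proof.
move=> g01 rho1 hw hP.
set C := (mxl1 P * vnorm x) ^+ 2.
have C0 : 0 <= C by exact: sqr_ge0.
have hZ k := IB_scale C0 (hP k).
apply: (@core _ _ _ Pr (fun k t => g ^+ k.+1 * scal ((w k t)^T *m P *m (AK ^+ k.+1 *m x)))
   (fun k t => C * Phi w k t) g (C * S) g01).
- move=> k; apply: mfM; first exact: measurable_cst.
  by apply: meas_scal => //; exact: cmeas_cst.
- by move=> k; case: (hZ k).
- by move=> k; case: (hZ k).
- move=> k t; rewrite exprMn; apply: ler_wpM2l; first exact: sqr_ge0.
  have h1 : `|scal ((w k t)^T *m P *m (AK ^+ k.+1 *m x))| <= mxl1 P * vnorm x * vnorm (w k t).
    apply: (le_trans (scal_le _ _ _)); rewrite [leRHS]mulrAC ler_wpM2l //.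
      by apply: mulr_ge0; [exact: mxl1_ge0|exact: vnorm_ge0].
    apply: (le_trans (specnorm_pow_le _ _ _)); rewrite ler_piMl ?vnorm_ge0 //.
    by apply: exprn_ile1; [exact: specnorm_ge0|exact: ltW].
  apply: (le_trans (sq_le h1)); rewrite exprMn /C; apply: ler_wpM2l; first exact: sqr_ge0.
  rewrite /Phi; set y := vnorm (w k t) ^+ 2.
  have -> : vnorm (w k t) ^+ 4 = y ^+ 2 by rewrite /y -exprM.
  nra.
- by move=> k; case: (hZ k).
Qed.
Lemma Lb (R : realType) d (T : measurableType d) (Pr : probability T R) n
  (P : 'M[R]_n) (g : R) (w : nat -> T -> 'cV[R]_n) S :
  0 < g < 1 -> (forall k, cmeas (w k)) ->
  (forall k, IB Pr (Phi w k) S) ->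
  (fun t => series_sum (fun k => g ^+ k.+1 * scal ((w k t)^T *m P *m w k t)))
    \in Lfun Pr 2%:E.
Proof.
move=> g01 hw hP.
set C := mxl1 P ^+ 2.
have C0 : 0 <= C by exact: sqr_ge0.
have hZ k := IB_scale C0 (hP k).
apply: (@core _ _ _ Pr (fun k t => g ^+ k.+1 * scal ((w k t)^T *m P *m w k t))
   (fun k t => C * Phi w k t) g (C * S) g01).
- move=> k; apply: mfM; first exact: measurable_cst.
  exact: meas_scal.
- by move=> k; case: (hZ k).
- by move=> k; case: (hZ k).
- move=> k t; rewrite exprMn; apply: ler_wpM2l; first exact: sqr_ge0.
  apply: (le_trans (sq_le (scal_le _ _ _))).
  rewrite -mulrA exprMn /C; apply: ler_wpM2l; first exact: sqr_ge0.
  rewrite /Phi -expr2 -exprM; set y := vnorm (w k t) ^+ 2.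
  have -> : vnorm (w k t) ^+ 4 = y ^+ 2 by rewrite /y -exprM.
  rewrite -/y; nra.
- by move=> k; case: (hZ k).
Qed.
Lemma Lc (R : realType) d (T : measurableType d) (Pr : probability T R) n
  (AK P : 'M[R]_n) (g : R) (w : nat -> T -> 'cV[R]_n) S :
  0 < g < 1 -> specnorm AK < 1 -> (forall k, cmeas (w k)) ->
  (forall k, IB Pr (Phi w k) S) ->
  (fun t => series_sum1 (fun k => g ^+ k.+1 *
          scal ((w k t)^T *m P *m (\sum_(0 <= tau < k) AK ^+ (k - tau) *m w tau t))))
    \in Lfun Pr 2%:E.
Proof.
move=> g01 rho1 hw hP.
set rho := specnorm AK in rho1 *.
have rho0 : 0 <= rho by exact: specnorm_ge0.
set r := (1 + rho) / 2.
have r0 : 0 < r by rewrite /r; lra.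
have r1 : r < 1 by rewrite /r; lra.
have rr : rho <= r by rewrite /r; lra.
have r01 : 0 <= r < 1 by rewrite ltW.
set cr := (1 - r)^-1.
have cr0 : 0 <= cr by rewrite invr_ge0 subr_ge0 ltW.
have S0 : 0 <= S.
  have [_ _ hi] := hP 0%N; rewrite -lee_fin; apply: le_trans hi.
  by apply: integral_ge0 => t _; rewrite lee_fin /Phi addr_ge0 // exprn_ge0 // vnorm_ge0.
set C := mxl1 P ^+ 2.
have C0 : 0 <= C by exact: sqr_ge0.
pose Z k t := cr * C * \sum_(0 <= tau < k) r ^+ (k - tau) * (Phi w k t + Phi w tau t).
have hZ : forall k, IB Pr (Z k) (cr * C * (cr * (S + S))).
  move=> k.
  have h1 := IB_sum (index_iota 0 k)
    (fun tau => IB_scale (exprn_ge0 (k - tau) (ltW r0)) (IB_add (hP k) (hP tau))).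
  have h2 := IB_scale (mulr_ge0 cr0 C0) h1.
  apply: IB_le h2; apply: ler_wpM2l; first exact: mulr_ge0.
  rewrite -mulr_suml; apply: ler_wpM2r; first exact: addr_ge0.
  exact: geom_rev.
pose u k t := g ^+ k.+1 *
   scal ((w k t)^T *m P *m (\sum_(0 <= tau < k) AK ^+ (k - tau) *m w tau t)).
have ub : forall k t, u k t ^+ 2 <= (g ^+ k.+1) ^+ 2 * Z k t.
  move=> k t; rewrite /u exprMn; apply: ler_wpM2l; first exact: sqr_ge0.
  rewrite scal_sumr.
  pose y tau := mxl1 P * r ^+ (k - tau) * (vnorm (w k t) * vnorm (w tau t)).
  have hy : `|\sum_(0 <= tau < k) scal ((w k t)^T *m P *m (AK ^+ (k - tau) *m w tau t))|
      <= \sum_(0 <= tau < k) y tau.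
    apply: (le_trans (ler_norm_sum _ _ _)); apply: ler_sum => tau _.
    apply: (le_trans (scal_le _ _ _)).
    have hN := specnorm_pow_le AK (w tau t) (k - tau).
    have ab : rho ^+ (k - tau) <= r ^+ (k - tau) by rewrite lerXn2r // nnegrE // ltW.
    have e1 : vnorm (AK ^+ (k - tau) *m w tau t) <= r ^+ (k - tau) * vnorm (w tau t).
      apply: (le_trans hN); apply: ler_wpM2r => //; exact: vnorm_ge0.
    have -> : y tau = mxl1 P * vnorm (w k t) * (r ^+ (k - tau) * vnorm (w tau t)).
      by rewrite /y; ring.
    apply: ler_wpM2l => //; apply: mulr_ge0; [exact: mxl1_ge0|exact: vnorm_ge0].
  apply: (le_trans (sq_le hy)).
  apply: (le_trans (@wcs _ _ _ y (fun tau => r ^+ (k - tau)) _)).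
    by move=> tau; exact: exprn_gt0.
  rewrite /Z -mulrA; apply: ler_pM.
  - by apply: sumr_ge0 => tau _; exact: exprn_ge0 (ltW r0).
  - apply: sumr_ge0 => tau _; apply: divr_ge0; [exact: sqr_ge0|exact: exprn_ge0 (ltW r0)].
  - exact: geom_rev.
  rewrite mulr_sumr; apply: ler_sum => tau _.
  have q0 : 0 < r ^+ (k - tau) by exact: exprn_gt0.
  rewrite /y /Phi; set q := r ^+ (k - tau).
  set W1 := vnorm (w k t); set W2 := vnorm (w tau t).
  have -> : (mxl1 P * q * (W1 * W2)) ^+ 2 / q = C * q * ((W1 ^+ 2) * (W2 ^+ 2)).
    by rewrite /C; field; rewrite gt_eqF.
  rewrite -mulrA; apply: ler_wpM2l => //; apply: ler_wpM2l; first exact: ltW.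
  have -> : W1 ^+ 4 = (W1 ^+ 2) ^+ 2 by rewrite -exprM.
  have -> : W2 ^+ 4 = (W2 ^+ 2) ^+ 2 by rewrite -exprM.
  have := sqr_ge0 W1; have := sqr_ge0 W2.
  set p1 := W1 ^+ 2; set p2 := W2 ^+ 2; move=> *; nra.
rewrite (_ : (fun t => _) = (fun t => series_sum (fun k => if (0 < k)%N then u k t else 0))); last first.
  by apply: funext => t; rewrite sum1E.
apply: (@core _ _ _ Pr (fun k t => if (0 < k)%N then u k t else 0) Z g
   (cr * C * (cr * (S + S))) g01).
- move=> k; case: (0 < k)%N; last exact: measurable_cst.
  apply: mfM; first exact: measurable_cst.
  apply: meas_scal => //; apply: cmeas_sum => tau; exact: cmeas_mul.
- by move=> k; case: (hZ k).
- by move=> k; case: (hZ k).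
- move=> k t; case: (0 < k)%N; first exact: ub.
  rewrite expr0n /=; apply: mulr_ge0; first exact: sqr_ge0.
  by case: (hZ k) => _ + _; apply.
- by move=> k; case: (hZ k).
Qed.
Unset Implicit Arguments. Set Strict Implicit.

Theorem theorem2 (R : realType) (d : measure_display) (T : measurableType d)
  (Pr : probability T R) (n m : nat)
  (A : 'M[R]_n) (B : 'M[R]_(n, m)) (K : 'M[R]_(m, n))
  (Q : 'M[R]_n) (Rc : 'M[R]_m) (gamma : R) (P : 'M[R]_n)
  (D : probability (n.-tuple R) R)
  (w : nat -> T -> 'cV[R]_n) (sigma4 rhoK : R) :
  posdef Q -> posdef Rc -> 0 < gamma < 1 ->
  P = Q + K^T *m Rc *m K + gamma *: ((A + B *m K)^T *m P *m (A + B *m K)) ->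
  (forall k, measurable_fun [set: T] (@cv2tuple R n \o w k)) ->
  (forall k (S : set (n.-tuple R)), measurable S ->
      Pr ((@cv2tuple R n \o w k) @^-1` S) = D S) ->
  mutually_independent Pr w ->
  (forall k (i : 'I_n), ('E_Pr[fun t => w k t i ord0] = 0)%E) ->
  (forall k, ('E_Pr[fun t => (vnorm (w k t) ^+ 4)%R] <= (sigma4 ^+ 4)%:E)%E) ->
  specnorm (A + B *m K) = rhoK -> rhoK < 1 ->
  forall x : 'cV[R]_n,
    let G := fun t => GK (A + B *m K) P gamma x (fun k => w k t) in
    G \in Lfun Pr 2%:E /\ ('V_Pr[G] < +oo)%E.
Proof.
move=> _ _ g01 _ hmeas _ _ _ hE hspec hrho x G.
have hw : forall k, cmeas (w k) := fun k => cmeas_w (hmeas k).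
have hP := IB_Phi hw hE.
have hA : specnorm (A + B *m K) < 1 by rewrite hspec.
have ha := La (AK := A + B *m K) P x g01 hA hw hP.
have hb := Lb P g01 hw hP.
have hc := Lc (AK := A + B *m K) P g01 hA hw hP.
have two : (1 <= (2 : R)) by rewrite ler1n.
have add : {in Lfun Pr 2%:E &, forall u v : T -> R, u + v \in Lfun Pr 2%:E} :=
  (Lfun_addr_closed Pr (p := 2%:E) (lee1n 2)).2.
pose Fa := fun t => series_sum (fun k => gamma ^+ k.+1 *
   scal ((w k t)^T *m P *m ((A + B *m K) ^+ k.+1 *m x))).
pose Fb := fun t => series_sum (fun k => gamma ^+ k.+1 * scal ((w k t)^T *m P *m w k t)).
pose Fc := fun t => series_sum1 (fun k => gamma ^+ k.+1 *
   scal ((w k t)^T *m P *m (\sum_(0 <= tau < k) (A + B *m K) ^+ (k - tau) *m w tau t))).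
have GE : G = ((cst (scal (x^T *m P *m x)) + (2 : R) \o* Fa) + Fb) + (2 : R) \o* Fc.
  apply: funext => t; rewrite /G /GK /Fa /Fb /Fc /=.
  by rewrite !fctE /= ![_ * 2]mulrC.
have GL : G \in Lfun Pr 2%:E.
  have h1 := add _ _ (Lfun_cst Pr (scal (x^T *m P *m x)) 2) (Lfun_scale 2 two ha).
  have h2 := add _ _ h1 hb.
  have h3 := add _ _ h2 (Lfun_scale 2 two hc).
  by rewrite GE.
split => //.
by rewrite ltey_eq variance_fin_num.
Qed.
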